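(* Let $a_1,\dots,a_7$ and $\alpha_1,\dots,\alpha_7$ be positive real numbers with $\sum_{i=1}^7\alpha_i=\pi$. Then $$\sum_{i=1}^7 a_i\cos\alpha_i\;\le\;\cos\frac{\pi}{7}\cdot\frac{1}{a_1a_2\cdots a_7}\,\psi(a_1^2,a_2^2,\dots,a_7^2),$$ where $\psi(x_1,\dots,x_7)=x_1x_2x_3x_4+x_2x_3x_4x_5+x_3x_4x_5x_6+x_4x_5x_6x_7+x_5x_6x_7x_1+x_6x_7x_1x_2+x_7x_1x_2x_3$. *)

(* Defs.v *)
From Stdlib Require Export Reals.
Open Scope R_scope.

Definition psi7 (x1 x2 x3 x4 x5 x6 x7 : R) : R :=
  x1*x2*x3*x4 + x2*x3*x4*x5 + x3*x4*x5*x6 + x4*x5*x6*x7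
  + x5*x6*x7*x1 + x6*x7*x1*x2 + x7*x1*x2*x3.

(* Main.v *)
Require Import Defs.
From Stdlib Require Import Reals Lra Psatz.
Open Scope R_scope.
Lemma cyc7 (c u0 u1 u2 u3 u4 u5 u6 : R)
  (HP : 8*c^3-4*c^2-4*c+1 = 0) (h0 : 0 <= c) (h1 : 0 <= -1 + 2*c^2)
  (h3 : 0 <= -1/2 + c) (h4 : 0 <= 1 + c - 2*c^2) :
  0 <= c*(u0^2+u1^2+u2^2+u3^2+u4^2+u5^2+u6^2)
     + (u0*u1+u1*u2+u2*u3+u3*u4+u4*u5+u5*u6+u6*u0).
Proof.
  assert (E : c*(u0^2+u1^2+u2^2+u3^2+u4^2+u5^2+u6^2)
     + (u0*u1+u1*u2+u2*u3+u3*u4+u4*u5+u5*u6+u6*u0) =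
     (((0) + (1)*c + (0)*c^2)*(u0 + ((2) + (2)*c + (-4)*c^2)*u1 + ((2) + (2)*c + (-4)*c^2)*u6)^2 + ((-1) + (0)*c + (2)*c^2)*(u1 + ((-1) + (2)*c + (0)*c^2)*u2 + ((1) + (2)*c + (-4)*c^2)*u6)^2 + ((1/2) + (0)*c + (0)*c^2)*(u2 + ((1) + (0)*c + (0)*c^2)*u3 + ((-1) + (-2)*c + (4)*c^2)*u6)^2 + ((-1/2) + (1)*c + (0)*c^2)*(u3 + ((-2) + (0)*c + (4)*c^2)*u4 + ((-2) + (-2)*c + (4)*c^2)*u6)^2 + ((1) + (1)*c + (-2)*c^2)*(u4 + ((0) + (2)*c + (0)*c^2)*u5 + ((1) + (0)*c + (0)*c^2)*u6)^2) + (8*c^3-4*c^2-4*c+1)*((3/2)*u6*u6 + (1)*u5*u6 + (2)*u4*u6 + (1)*u4*u5 + (1)*u4*u4 + (-1)*u3*u6 + (-1)*u3*u4 + (-1)*u2*u6 + (1/2)*u2*u2 + (2)*u1*u6 + (-1)*u1*u2 + (1)*u1*u1 + (1)*u0*u6 + (1)*u0*u1 + (4)*c*u6*u6 + (1)*c*u5*u5 + (2)*c*u4*u6 + (-2)*c*u2*u6 + (-1)*c*u2*u2 + (4)*c*u1*u6 + (1)*c*u1*u1 + (-2)*c*c*u6*u6 + (-4)*c*c*u4*u6 + (-2)*c*c*u4*u4 + (4)*c*c*u2*u6 + (-4)*c*c*u1*u6 + (-2)*c*c*u1*u1 + (-4)*c*c*c*u6*u6)) by field.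
  rewrite E, HP.
  repeat apply Rplus_le_le_0_compat.
  all: first [ right; ring | apply Rmult_le_pos; [lra | apply pow2_ge_0] ].
Qed.

Lemma cfacts : 8*cos (PI/7)^3 - 4*cos (PI/7)^2 - 4*cos (PI/7) + 1 = 0
  /\ 0 <= -1 + 2 * cos (PI/7)^2 /\ 0 <= -1/2 + cos (PI/7)
  /\ 0 <= 1 + cos (PI/7) - 2 * cos (PI/7)^2 /\ 0 <= cos (PI/7).
Proof.
  set (t := PI/7).
  assert (Hpi := PI_RGT_0).
  assert (Hlt1 : cos t < 1).
  { rewrite <- cos_0. apply cos_decreasing_1; unfold t; lra. }
  assert (Hgt : cos (PI/4) < cos t).
  { apply cos_decreasing_1; unfold t; lra. }
  rewrite cos_PI4 in Hgt.
  assert (Hs2 : sqrt 2 ^ 2 = 2) by (apply pow2_sqrt; lra).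
  assert (Hs2p : 0 < sqrt 2) by (apply sqrt_lt_R0; lra).
  assert (Hc2 : 1 < cos t * sqrt 2).
  { apply Rmult_lt_compat_r with (r := sqrt 2) in Hgt; [|lra].
    replace (1 / sqrt 2 * sqrt 2) with 1 in Hgt by (field; lra). lra. }
  assert (Hcpos : 0 < cos t) by nra.
  assert (Hsq : 1 < 2 * cos t ^ 2) by nra.
  assert (Hsc := sin2_cos2 t). rewrite !Rsqr_pow2 in Hsc.
  assert (H4 : cos (4*t) = - cos (3*t)).
  { replace (4*t) with (PI - 3*t) by (unfold t; field).
    apply Rtrigo_facts.cos_pi_minus. }
  assert (E3 : cos (3*t) = cos t ^ 3 - 3 * cos t * sin t ^ 2).
  { replace (3*t) with ((t + t) + t) by ring.
    rewrite cos_plus, cos_plus, sin_plus. ring. }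
  assert (E4 : cos (4*t) = (cos t ^ 2 - sin t ^ 2)^2 - (2 * sin t * cos t)^2).
  { replace (4*t) with ((t + t) + (t + t)) by ring.
    rewrite cos_plus, cos_plus, sin_plus. ring. }
  rewrite E3, E4 in H4.
  assert (Hs : sin t ^ 2 = 1 - cos t ^ 2) by lra.
  assert (Hq : (cos t + 1) * (8*cos t^3 - 4*cos t^2 - 4*cos t + 1) = 0).
  { replace (sin t ^ 2) with (1 - cos t ^ 2) in H4 by lra.
    assert (Hx : (2 * sin t * cos t)^2 = 4 * (1 - cos t ^ 2) * cos t ^ 2).
    { replace ((2 * sin t * cos t)^2) with (4 * sin t ^ 2 * cos t ^ 2) by ring.
      rewrite Hs. ring. }
    rewrite Hx in H4. nra. }
  assert (HP : 8*cos t^3 - 4*cos t^2 - 4*cos t + 1 = 0).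
  { destruct (Rmult_integral _ _ Hq) as [h|h]; [lra|exact h]. }
  split; [exact HP|].
  split; [lra|]. split; [nra|]. split; [nra|lra].
Qed.

Lemma quad7 (p1 p2 p3 p4 p5 p6 p7 : R) :
  p1*p2 + p2*p3 + p3*p4 + p4*p5 + p5*p6 + p6*p7 - p7*p1
  <= cos (PI/7) * (p1^2+p2^2+p3^2+p4^2+p5^2+p6^2+p7^2).
Proof.
  destruct cfacts as [HP [h1 [h3 [h4 h0]]]].
  pose proof (cyc7 (cos (PI/7)) (-p1) p2 (-p3) p4 (-p5) p6 (-p7) HP h0 h1 h3 h4) as H.
  assert (E : cos (PI / 7) * ((- p1) ^ 2 + p2 ^ 2 + (- p3) ^ 2 + p4 ^ 2 + (- p5) ^ 2 + p6 ^ 2 + (- p7) ^ 2) +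
       (- p1 * p2 + p2 * - p3 + - p3 * p4 + p4 * - p5 + - p5 * p6 + p6 * - p7 + - p7 * - p1)
     = cos (PI/7) * (p1^2+p2^2+p3^2+p4^2+p5^2+p6^2+p7^2)
       - (p1*p2 + p2*p3 + p3*p4 + p4*p5 + p5*p6 + p6*p7 - p7*p1)) by ring.
  lra.
Qed.

Lemma angle7 (z1 z2 z3 z4 z5 z6 z7 b1 b2 b3 b4 b5 b6 b7 : R)
  (hs : b1 + b2 + b3 + b4 + b5 + b6 + b7 = PI) :
  z1*z2*cos b1 + z2*z3*cos b2 + z3*z4*cos b3 + z4*z5*cos b4
  + z5*z6*cos b5 + z6*z7*cos b6 + z7*z1*cos b7
  <= cos (PI/7) * (z1^2+z2^2+z3^2+z4^2+z5^2+z6^2+z7^2).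
Proof.
  pose (t2 := b1). pose (t3 := b1+b2). pose (t4 := b1+b2+b3).
  pose (t5 := b1+b2+b3+b4). pose (t6 := b1+b2+b3+b4+b5).
  pose (t7 := b1+b2+b3+b4+b5+b6).
  assert (e1 : cos b1 = cos 0 * cos t2 + sin 0 * sin t2).
  { rewrite <- cos_minus, <- cos_neg. f_equal. unfold t2. ring. }
  assert (e2 : cos b2 = cos t2 * cos t3 + sin t2 * sin t3).
  { rewrite <- cos_minus, <- cos_neg. f_equal. unfold t2, t3. ring. }
  assert (e3 : cos b3 = cos t3 * cos t4 + sin t3 * sin t4).
  { rewrite <- cos_minus, <- cos_neg. f_equal. unfold t3, t4. ring. }
  assert (e4 : cos b4 = cos t4 * cos t5 + sin t4 * sin t5).
  { rewrite <- cos_minus, <- cos_neg. f_equal. unfold t4, t5. ring. }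
  assert (e5 : cos b5 = cos t5 * cos t6 + sin t5 * sin t6).
  { rewrite <- cos_minus, <- cos_neg. f_equal. unfold t5, t6. ring. }
  assert (e6 : cos b6 = cos t6 * cos t7 + sin t6 * sin t7).
  { rewrite <- cos_minus, <- cos_neg. f_equal. unfold t6, t7. ring. }
  assert (e7 : cos b7 = - (cos t7 * cos 0 + sin t7 * sin 0)).
  { rewrite cos_0, sin_0. replace b7 with (PI - t7) by (unfold t7; lra).
    rewrite Rtrigo_facts.cos_pi_minus. ring. }
  rewrite cos_0, sin_0 in e1, e7.
  pose proof (quad7 z1 (z2*cos t2) (z3*cos t3) (z4*cos t4) (z5*cos t5) (z6*cos t6) (z7*cos t7)) as Q1.
  pose proof (quad7 0 (z2*sin t2) (z3*sin t3) (z4*sin t4) (z5*sin t5) (z6*sin t6) (z7*sin t7)) as Q2.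
  assert (S2 := sin2_cos2 t2). assert (S3 := sin2_cos2 t3). assert (S4 := sin2_cos2 t4).
  assert (S5 := sin2_cos2 t5). assert (S6 := sin2_cos2 t6). assert (S7 := sin2_cos2 t7).
  rewrite !Rsqr_pow2 in S2, S3, S4, S5, S6, S7.
  rewrite e1, e2, e3, e4, e5, e6, e7.
  assert (E : z1^2+z2^2+z3^2+z4^2+z5^2+z6^2+z7^2 =
     (z1^2 + (z2*cos t2)^2 + (z3*cos t3)^2 + (z4*cos t4)^2 + (z5*cos t5)^2 + (z6*cos t6)^2 + (z7*cos t7)^2)
     + (0^2 + (z2*sin t2)^2 + (z3*sin t3)^2 + (z4*sin t4)^2 + (z5*sin t5)^2 + (z6*sin t6)^2 + (z7*sin t7)^2)).
  { replace (z2^2) with (z2^2 * (sin t2 ^2 + cos t2 ^2)) by (rewrite S2; ring).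
    replace (z3^2) with (z3^2 * (sin t3 ^2 + cos t3 ^2)) by (rewrite S3; ring).
    replace (z4^2) with (z4^2 * (sin t4 ^2 + cos t4 ^2)) by (rewrite S4; ring).
    replace (z5^2) with (z5^2 * (sin t5 ^2 + cos t5 ^2)) by (rewrite S5; ring).
    replace (z6^2) with (z6^2 * (sin t6 ^2 + cos t6 ^2)) by (rewrite S6; ring).
    replace (z7^2) with (z7^2 * (sin t7 ^2 + cos t7 ^2)) by (rewrite S7; ring).
    ring. }
  rewrite E, Rmult_plus_distr_l.
  match goal with |- ?l <= _ => replace l with
    ((z1 * (z2 * cos t2) + z2 * cos t2 * (z3 * cos t3) + z3 * cos t3 * (z4 * cos t4) +
      z4 * cos t4 * (z5 * cos t5) + z5 * cos t5 * (z6 * cos t6) + z6 * cos t6 * (z7 * cos t7) -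
      z7 * cos t7 * z1) +
     (0 * (z2 * sin t2) + z2 * sin t2 * (z3 * sin t3) + z3 * sin t3 * (z4 * sin t4) +
      z4 * sin t4 * (z5 * sin t5) + z5 * sin t5 * (z6 * sin t6) + z6 * sin t6 * (z7 * sin t7) -
      z7 * sin t7 * 0)) by ring end.
  lra.
Qed.

Lemma thm_r (r1 r2 r3 r4 r5 r6 r7 al1 al2 al3 al4 al5 al6 al7 : R)
  (h1 : 0 < r1) (h2 : 0 < r2) (h3 : 0 < r3) (h4 : 0 < r4)
  (h5 : 0 < r5) (h6 : 0 < r6) (h7 : 0 < r7)
  (hsum : al1 + al2 + al3 + al4 + al5 + al6 + al7 = PI) :
  r1^2 * cos al1 + r2^2 * cos al2 + r3^2 * cos al3 + r4^2 * cos al4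
  + r5^2 * cos al5 + r6^2 * cos al6 + r7^2 * cos al7
  <= cos (PI / 7) * (1 / (r1^2 * r2^2 * r3^2 * r4^2 * r5^2 * r6^2 * r7^2))
     * psi7 ((r1^2)^2) ((r2^2)^2) ((r3^2)^2) ((r4^2)^2) ((r5^2)^2) ((r6^2)^2) ((r7^2)^2).
Proof.
  set (y1 := r1*r2*r3*r4/(r5*r6*r7)).
  set (y2 := r2*r3*r4*r5/(r6*r7*r1)).
  set (y3 := r3*r4*r5*r6/(r7*r1*r2)).
  set (y4 := r4*r5*r6*r7/(r1*r2*r3)).
  set (y5 := r5*r6*r7*r1/(r2*r3*r4)).
  set (y6 := r6*r7*r1*r2/(r3*r4*r5)).
  set (y7 := r7*r1*r2*r3/(r4*r5*r6)).
  pose proof (angle7 y1 y5 y2 y6 y3 y7 y4 al1 al5 al2 al6 al3 al7 al4 ltac:(lra)) as H.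
  assert (n1 : r1 <> 0) by lra. assert (n2 : r2 <> 0) by lra.
  assert (n3 : r3 <> 0) by lra. assert (n4 : r4 <> 0) by lra.
  assert (n5 : r5 <> 0) by lra. assert (n6 : r6 <> 0) by lra.
  assert (n7 : r7 <> 0) by lra.
  assert (q1 : y1*y5 = r1^2) by (unfold y1, y5; field; repeat split; assumption).
  assert (q2 : y5*y2 = r5^2) by (unfold y5, y2; field; repeat split; assumption).
  assert (q3 : y2*y6 = r2^2) by (unfold y2, y6; field; repeat split; assumption).
  assert (q4 : y6*y3 = r6^2) by (unfold y6, y3; field; repeat split; assumption).
  assert (q5 : y3*y7 = r3^2) by (unfold y3, y7; field; repeat split; assumption).
  assert (q6 : y7*y4 = r7^2) by (unfold y7, y4; field; repeat split; assumption).
  assert (q7 : y4*y1 = r4^2) by (unfold y4, y1; field; repeat split; assumption).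
  rewrite q1, q2, q3, q4, q5, q6, q7 in H.
  assert (E : (1 / (r1^2 * r2^2 * r3^2 * r4^2 * r5^2 * r6^2 * r7^2))
     * psi7 ((r1^2)^2) ((r2^2)^2) ((r3^2)^2) ((r4^2)^2) ((r5^2)^2) ((r6^2)^2) ((r7^2)^2)
     = y1^2 + y5^2 + y2^2 + y6^2 + y3^2 + y7^2 + y4^2).
  { unfold y1, y2, y3, y4, y5, y6, y7, psi7. field. repeat split; assumption. }
  rewrite Rmult_assoc, E. lra.
Qed.

Theorem theorem3 (a1 a2 a3 a4 a5 a6 a7 al1 al2 al3 al4 al5 al6 al7 : R)
  (ha1 : 0 < a1) (ha2 : 0 < a2) (ha3 : 0 < a3) (ha4 : 0 < a4)
  (ha5 : 0 < a5) (ha6 : 0 < a6) (ha7 : 0 < a7)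
  (hl1 : 0 < al1) (hl2 : 0 < al2) (hl3 : 0 < al3) (hl4 : 0 < al4)
  (hl5 : 0 < al5) (hl6 : 0 < al6) (hl7 : 0 < al7)
  (hsum : al1 + al2 + al3 + al4 + al5 + al6 + al7 = PI) :
  a1 * cos al1 + a2 * cos al2 + a3 * cos al3 + a4 * cos al4
  + a5 * cos al5 + a6 * cos al6 + a7 * cos al7
  <= cos (PI / 7) * (1 / (a1 * a2 * a3 * a4 * a5 * a6 * a7))
     * psi7 (a1^2) (a2^2) (a3^2) (a4^2) (a5^2) (a6^2) (a7^2).
Proof.
  rewrite <- (pow2_sqrt a1) by lra. rewrite <- (pow2_sqrt a2) by lra.
  rewrite <- (pow2_sqrt a3) by lra. rewrite <- (pow2_sqrt a4) by lra.
  rewrite <- (pow2_sqrt a5) by lra. rewrite <- (pow2_sqrt a6) by lra.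
  rewrite <- (pow2_sqrt a7) by lra.
  apply thm_r; try apply sqrt_lt_R0; assumption.
Qed.
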